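(* Let $X$ be a normed linear space, $F:X\rightrightarrows\mathbb{R}^p$ a set-valued map, $(x,y)\in\mathrm{gph}F$. Assume $F$ is Lipschitz around $x$ and $y\in\mathcal{PE}(F(x),P)$. Then $DF_\uparrow((x,y);0)\cap(-P)=\{0\}$, and for every $v\in X$ the sets $DF_\uparrow((x,y);v)$ and $DF((x,y);v)$ are $P$-bounded.
   Context: $P\subset\mathbb{R}^p$ is a closed convex pointed cone containing $0$ with nonempty interior; $F_\uparrow(x)=F(x)+P$. $\mathcal{E}(S,P)=\{y\in S:(y-P)\cap S=\{y\}\}$; contingent cone $T_S(z)=\{v:\exists h_k\to0^+,\exists v_k\to v,z+h_kv_k\in S\}$; $\mathcal{PE}(S,P)=\{y\in\mathcal{E}(S,P):T_{S+P}(y)\cap(-P)=\{0\}\}$. $F$ is Lipschitz around $x$ if there are $l>0$ and a neighborhood $\mathcal{O}$ of $x$ with $F(x_1)\subset F(x_2)+l\|x_1-x_2\|\mathbf{B}$ for $x_1,x_2\in\mathcal{O}$. The contingent derivative $DF(x,y)$ has graph $T_{\mathrm{gph}F}(x,y)$; value at $v$ written $DF((x,y);v)$. Recession cone of nonempty $S\subset\mathbb{R}^p$: $S^+=\{z:\exists h_k\to0^+,\exists y_k\in S,h_ky_k\to z\}$. $S$ is $P$-bounded if $S^+\cap(-P)=\{0\}$. *)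

(* Defs.v *)
From Stdlib Require Import Reals Lra.
From Stdlib Require Fin.
Open Scope R_scope.

Record NormedSpace := {
  ns_car :> Type;
  vzero : ns_car;
  vadd : ns_car -> ns_car -> ns_car;
  vopp : ns_car -> ns_car;
  vscal : R -> ns_car -> ns_car;
  vnorm : ns_car -> R;
  vadd_assoc : forall a b c, vadd a (vadd b c) = vadd (vadd a b) c;
  vadd_comm : forall a b, vadd a b = vadd b a;
  vadd_0 : forall a, vadd a vzero = a;
  vadd_opp : forall a, vadd a (vopp a) = vzero;
  vscal_addr : forall t a b, vscal t (vadd a b) = vadd (vscal t a) (vscal t b);
  vscal_addl : forall s t a, vscal (s + t) a = vadd (vscal s a) (vscal t a);
  vscal_mul : forall s t a, vscal (s * t) a = vscal s (vscal t a);
  vscal_1 : forall a, vscal 1 a = a;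
  vnorm_eq0 : forall a, vnorm a = 0 -> a = vzero;
  vnorm_scal : forall t a, vnorm (vscal t a) = Rabs t * vnorm a;
  vnorm_triangle : forall a b, vnorm (vadd a b) <= vnorm a + vnorm b
}.
Arguments vzero {_}.
Arguments vadd {_} _ _.
Arguments vopp {_} _.
Arguments vscal {_} _ _.
Arguments vnorm {_} _.

Definition vsub {X : NormedSpace} (a b : X) : X := vadd a (vopp b).

Definition cvX {X : NormedSpace} (u : nat -> X) (l : X) : Prop :=
  forall eps, 0 < eps -> exists N, forall k, (N <= k)%nat -> vnorm (vsub (u k) l) < eps.

Definition Vec (p : nat) := Fin.t p -> R.
Definition vec0 {p} : Vec p := fun _ => 0.
Definition vecadd {p} (a b : Vec p) : Vec p := fun i => a i + b i.
Definition vecopp {p} (a : Vec p) : Vec p := fun i => - a i.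
Definition vecscal {p} (t : R) (a : Vec p) : Vec p := fun i => t * a i.

Definition cvV {p} (u : nat -> Vec p) (l : Vec p) : Prop :=
  forall eps, 0 < eps -> exists N, forall k, (N <= k)%nat ->
    forall i, Rabs (u k i - l i) < eps.

Definition set_eq {T : Type} (A B : T -> Prop) : Prop := forall z, A z <-> B z.

Definition ordering_cone {p} (P : Vec p -> Prop) : Prop :=
  P vec0 /\
  (forall t a, 0 <= t -> P a -> P (vecscal t a)) /\
  (forall t a b, 0 <= t <= 1 -> P a -> P b ->
      P (vecadd (vecscal t a) (vecscal (1 - t) b))) /\
  (forall a, P a -> P (vecopp a) -> a = vec0) /\
  (forall u l, (forall k, P (u k)) -> cvV u l -> P l) /\
  (exists c r, 0 < r /\ forall w, (forall i, Rabs (w i - c i) < r) -> P w).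

Definition setaddP {p} (S P : Vec p -> Prop) : Vec p -> Prop :=
  fun w => exists y q, S y /\ P q /\ w = vecadd y q.

Definition Fup {X : NormedSpace} {p} (F : X -> Vec p -> Prop) (P : Vec p -> Prop)
  : X -> Vec p -> Prop := fun x => setaddP (F x) P.

Definition negP {p} (P : Vec p -> Prop) : Vec p -> Prop := fun w => P (vecopp w).

Definition Eff {p} (S P : Vec p -> Prop) (y : Vec p) : Prop :=
  S y /\ set_eq (fun w => (exists q, P q /\ w = vecadd y (vecopp q)) /\ S w)
                (fun w => w = y).

Definition Tcone {p} (S : Vec p -> Prop) (z : Vec p) (v : Vec p) : Prop :=
  exists h : nat -> R, (forall k, 0 < h k) /\ Un_cv h 0 /\
  exists vs : nat -> Vec p, cvV vs v /\
    forall k, S (vecadd z (vecscal (h k) (vs k))).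

Definition PEff {p} (S P : Vec p -> Prop) (y : Vec p) : Prop :=
  Eff S P y /\
  set_eq (fun v => Tcone (setaddP S P) y v /\ negP P v) (fun v => v = vec0).

(* Lipschitz around x (ball B taken for the max norm on R^p) *)
Definition Lipschitz_around {X : NormedSpace} {p} (F : X -> Vec p -> Prop) (x : X)
  : Prop :=
  exists l delta, 0 < l /\ 0 < delta /\
  forall x1 x2, vnorm (vsub x1 x) < delta -> vnorm (vsub x2 x) < delta ->
    forall w, F x1 w -> exists w', F x2 w' /\
      forall i, Rabs (w i - w' i) <= l * vnorm (vsub x1 x2).

(* contingent derivative: DF((x,y);v) = {w | (v,w) ∈ T_{gph F}(x,y)} *)
Definition DF {X : NormedSpace} {p} (F : X -> Vec p -> Prop) (x : X) (y : Vec p)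
  (v : X) : Vec p -> Prop :=
  fun w => exists h : nat -> R, (forall k, 0 < h k) /\ Un_cv h 0 /\
  exists (vs : nat -> X) (ws : nat -> Vec p), cvX vs v /\ cvV ws w /\
    forall k, F (vadd x (vscal (h k) (vs k))) (vecadd y (vecscal (h k) (ws k))).

Definition rec_cone {p} (S : Vec p -> Prop) : Vec p -> Prop :=
  fun z => exists h : nat -> R, (forall k, 0 < h k) /\ Un_cv h 0 /\
  exists ys : nat -> Vec p, (forall k, S (ys k)) /\
    cvV (fun k => vecscal (h k) (ys k)) z.

Definition P_bounded {p} (P S : Vec p -> Prop) : Prop :=
  set_eq (fun z => rec_cone S z /\ negP P z) (fun z => z = vec0).

(* Main.v *)
Require Import Defs.
From Stdlib Require Import Reals Lra Lia.
From Stdlib Require Import ClassicalEpsilon FunctionalExtensionality.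
Open Scope R_scope.

Section NS.
Variable X : NormedSpace.
Implicit Types a b c : X.

Lemma vadd_cancel a b c : vadd a b = vadd a c -> b = c.
Proof.
  intro H.
  assert (E : forall d, vadd (vopp a) (vadd a d) = d).
  { intro d. rewrite vadd_assoc, (vadd_comm _ (vopp a) a), vadd_opp,
      vadd_comm, vadd_0. reflexivity. }
  rewrite <- (E b), <- (E c), H; reflexivity.
Qed.

Lemma vscal0 a : vscal 0 a = vzero.
Proof.
  apply (vadd_cancel (vscal 0 a)). rewrite <- vscal_addl, Rplus_0_l, vadd_0.
  reflexivity.
Qed.

Lemma vscal_z t : vscal t (@vzero X) = vzero.
Proof.
  rewrite <- (vscal0 vzero) at 1. rewrite <- vscal_mul, Rmult_0_r, vscal0.
  reflexivity.
Qed.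

Lemma vnorm0 : vnorm (@vzero X) = 0.
Proof. rewrite <- (vscal0 vzero), vnorm_scal, Rabs_R0; ring. Qed.

Lemma vopp_scal a : vopp a = vscal (-1) a.
Proof.
  apply (vadd_cancel a). rewrite vadd_opp.
  rewrite <- (vscal_1 _ a) at 1. rewrite <- vscal_addl.
  replace (1 + -1) with 0 by ring. rewrite vscal0. reflexivity.
Qed.

Lemma vnorm_opp a : vnorm (vopp a) = vnorm a.
Proof. rewrite vopp_scal, vnorm_scal, Rabs_left by lra; ring. Qed.

Lemma vnorm_pos a : 0 <= vnorm a.
Proof.
  pose proof (vnorm_triangle _ a (vopp a)) as H.
  rewrite vadd_opp, vnorm0, vnorm_opp in H. lra.
Qed.

Lemma vsub_add a b : vsub (vadd a b) a = b.
Proof.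
  unfold vsub. rewrite (vadd_comm _ a b), <- vadd_assoc, vadd_opp, vadd_0.
  reflexivity.
Qed.

Lemma vsub_xx a : vsub a a = vzero.
Proof. apply vadd_opp. Qed.

Lemma vopp_add a b : vopp (vadd a b) = vadd (vopp a) (vopp b).
Proof. rewrite !vopp_scal, vscal_addr. reflexivity. Qed.

Lemma vsub_add2 a b : vsub a (vadd a b) = vopp b.
Proof.
  unfold vsub. rewrite vopp_add, vadd_assoc, vadd_opp, vadd_comm, vadd_0.
  reflexivity.
Qed.

Lemma vnorm_sub_le a b : vnorm a <= vnorm (vsub a b) + vnorm b.
Proof.
  replace a with (vadd (vsub a b) b) at 1. apply vnorm_triangle.
  unfold vsub. rewrite <- vadd_assoc, (vadd_comm _ (vopp b) b), vadd_opp, vadd_0.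
  reflexivity.
Qed.
End NS.

Lemma inv_small eps : 0 < eps -> exists N, forall n, (N <= n)%nat -> / (INR n + 1) < eps.
Proof.
  intro He. destruct (archimed_cor1 eps He) as [N [HN HN0]].
  exists N. intros n Hn. apply le_INR in Hn. apply lt_0_INR in HN0.
  eapply Rle_lt_trans; [|exact HN]. apply Rinv_le_contravar; lra.
Qed.

Lemma inv_pos n : 0 < / (INR n + 1).
Proof. apply Rinv_0_lt_compat. pose proof (pos_INR n). lra. Qed.

Definition cvR (u : nat -> R) (l : R) := forall eps, 0 < eps -> exists N, forall k, (N <= k)%nat -> Rabs (u k - l) < eps.

Lemma BW1 (u : nat -> R) M : (forall k, Rabs (u k) <= M) ->
  exists phi : nat -> nat, exists a, (forall k, (k <= phi k)%nat) /\ cvR (fun k => u (phi k)) a.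
Proof.
  intro HM.
  destruct (Bolzano_Weierstrass u (fun c => -M <= c <= M) (compact_P3 (-M) M)) as [l Hl].
  { intro n. specialize (HM n). unfold Rabs in HM; destruct Rcase_abs in HM; lra. }
  assert (H : forall n N, exists m, (N <= m)%nat /\ Rabs (u m - l) < / (INR n + 1)).
  { intros n N. destruct (Hl (disc l (mkposreal _ (inv_pos n))) N) as [m Hm].
    - exists (mkposreal _ (inv_pos n)). intros z Hz. exact Hz.
    - exists m. exact Hm. }
  pose (g := fun n N => proj1_sig (constructive_indefinite_description _ (H n N))).
  assert (Hg : forall n N, (N <= g n N)%nat /\ Rabs (u (g n N) - l) < / (INR n + 1)).
  { intros n N. unfold g. destruct constructive_indefinite_description; simpl; auto. }
  pose (phi := fix phi n := match n with O => g O O | S n' => g (S n') (S (phi n')) end).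
  exists phi, l. split.
  - induction k. lia. simpl. pose proof (proj1 (Hg (S k) (S (phi k)))). lia.
  - intros eps He. destruct (inv_small eps He) as [N HN]. exists N. intros k Hk.
    eapply Rlt_trans; [|apply (HN k Hk)].
    destruct k; simpl; apply Hg.
Qed.

Lemma BWp p (u : nat -> Vec p) M : (forall k i, Rabs (u k i) <= M) ->
  exists phi : nat -> nat, exists l, (forall k, (k <= phi k)%nat) /\ cvV (fun k => u (phi k)) l.
Proof.
  revert u. induction p as [|p IH]; intros u HM.
  - exists (fun k => k), vec0. split. intro; lia.
    intros eps He. exists O. intros k _ i. apply (Fin.case0 (fun _ => _) i).
  - destruct (IH (fun k i => u k (Fin.FS i))) as [phi [l' [Hphi Hl']]].
    { intros; apply HM. }
    destruct (BW1 (fun k => u (phi k) Fin.F1) M) as [psi [a [Hpsi Ha]]].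
    { intros; apply HM. }
    exists (fun k => phi (psi k)), (fun i => Fin.caseS' i (fun _ => R) a l').
    split. { intro k. specialize (Hphi (psi k)). specialize (Hpsi k). lia. }
    intros eps He. destruct (Hl' eps He) as [N1 H1]. destruct (Ha eps He) as [N2 H2].
    exists (N1 + N2)%nat. intros k Hk i. pattern i; apply (@Fin.caseS' p i).
    + simpl. apply H2. lia.
    + intro j. simpl. apply (H1 (psi k)). specialize (Hpsi k). lia.
Qed.

Lemma choice1 {A : Type} (Q : nat -> A -> Prop) :
  (forall n, exists a, Q n a) -> exists f : nat -> A, forall n, Q n (f n).
Proof.
  intro H. exists (fun n => proj1_sig (constructive_indefinite_description _ (H n))).
  intro n. destruct constructive_indefinite_description; simpl; auto.
Qed.

Lemma choice2 {A B : Type} (Q : nat -> A -> B -> Prop) :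
  (forall n, exists a b, Q n a b) -> exists (f : nat -> A) (g : nat -> B), forall n, Q n (f n) (g n).
Proof.
  intro H. destruct (choice1 (fun n (ab : A * B) => Q n (fst ab) (snd ab))) as [f Hf].
  { intro n. destruct (H n) as [a [b Hab]]. exists (a, b). exact Hab. }
  exists (fun n => fst (f n)), (fun n => snd (f n)). exact Hf.
Qed.

Lemma vec_bound p (w : Vec p) : exists M, 0 <= M /\ forall i, Rabs (w i) <= M.
Proof.
  induction p as [|p IH].
  - exists 0. split. lra. intro i. apply (Fin.case0 (fun _ => _) i).
  - destruct (IH (fun i => w (Fin.FS i))) as [M [HM0 HM]].
    exists (Rmax M (Rabs (w Fin.F1))). split.
    + eapply Rle_trans; [exact HM0|apply Rmax_l].
    + intro i. pattern i; apply (@Fin.caseS' p i).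
      * apply Rmax_r.
      * intro j. eapply Rle_trans; [apply HM|apply Rmax_l].
Qed.

Lemma inv_cv : Un_cv (fun k => / (INR k + 1)) 0.
Proof.
  intros eps He. destruct (inv_small eps He) as [N HN]. exists N. intros n Hn.
  unfold R_dist. rewrite Rminus_0_r, Rabs_right by (left; apply inv_pos). auto.
Qed.

Section Main.
Variable X : NormedSpace.
Variable p : nat.
Variable P : Vec p -> Prop.
Variable F : X -> Vec p -> Prop.
Variable x : X.
Variable y : Vec p.
Variables l delta : R.
Hypothesis Hl : 0 < l.
Hypothesis Hd : 0 < delta.
Hypothesis HLip : forall x1 x2, vnorm (vsub x1 x) < delta -> vnorm (vsub x2 x) < delta ->
    forall w, F x1 w -> exists w', F x2 w' /\
      forall i, Rabs (w i - w' i) <= l * vnorm (vsub x1 x2).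

Lemma keyK h u w' : 0 < h -> h * vnorm u < delta ->
  Fup F P (vadd x (vscal h u)) (vecadd y (vecscal h w')) ->
  exists d : Vec p, (forall i, Rabs (d i) <= l * vnorm u) /\
    setaddP (F x) P (vecadd y (vecscal h (vecadd w' d))).
Proof.
  intros Hh Hhu [a [q [Ha [Hq Heq]]]].
  assert (N1 : vnorm (vsub (vadd x (vscal h u)) x) = h * vnorm u).
  { rewrite vsub_add, vnorm_scal, Rabs_right by lra. reflexivity. }
  destruct (HLip (vadd x (vscal h u)) x) with (w := a) as [a' [Ha' Hb]]; auto.
  { lra. }
  { rewrite vsub_xx, vnorm0. lra. }
  exists (fun i => (a' i - a i) / h). split.
  - intro i. specialize (Hb i). rewrite N1, Rabs_minus_sym in Hb.
    apply Rmult_le_reg_r with h; auto.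
    replace (Rabs ((a' i - a i) / h) * h) with (Rabs (a' i - a i)).
    + lra.
    + unfold Rdiv. rewrite Rabs_mult, Rabs_inv, (Rabs_right h) by lra. field. lra.
  - exists a', q. split; [exact Ha'|]. split; [exact Hq|].
    apply functional_extensionality. intro i.
    assert (E := equal_f Heq i). unfold vecadd, vecscal in *.
    replace (y i) with (a i + q i - h * w' i) by lra. field. lra.
Qed.

Lemma lemB v w : DF (Fup F P) x y v w -> forall eps, 0 < eps ->
  exists h (w' d : Vec p), 0 < h < eps /\ (forall i, Rabs (w' i - w i) < eps) /\
    (forall i, Rabs (d i) <= l * (vnorm v + eps)) /\
    setaddP (F x) P (vecadd y (vecscal h (vecadd w' d))).
Proof.
  intros [hs [Hpos [Hcv [vs [ws [Hvs [Hws HF]]]]]]] eps He.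
  pose proof (vnorm_pos _ v) as Hnv.
  set (e1 := Rmin eps (delta / (vnorm v + eps))).
  assert (He1 : 0 < e1). { apply Rmin_pos; auto. apply Rdiv_lt_0_compat; lra. }
  destruct (Hcv e1 He1) as [N1 H1].
  destruct (Hvs eps He) as [N2 H2].
  destruct (Hws eps He) as [N3 H3].
  set (k := (N1 + N2 + N3)%nat).
  specialize (H1 k ltac:(lia)). specialize (H2 k ltac:(lia)). specialize (H3 k ltac:(lia)).
  unfold R_dist in H1. rewrite Rminus_0_r, Rabs_right in H1 by (left; apply Hpos).
  assert (Hvk : vnorm (vs k) < vnorm v + eps).
  { pose proof (vnorm_sub_le _ (vs k) v). lra. }
  assert (Hhk : hs k < delta / (vnorm v + eps)).
  { eapply Rlt_le_trans; [exact H1|apply Rmin_r]. }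
  assert (Hhk2 : hs k * vnorm (vs k) < delta).
  { assert (hs k * (vnorm v + eps) < delta / (vnorm v + eps) * (vnorm v + eps)).
    { apply Rmult_lt_compat_r; lra. }
    replace (delta / (vnorm v + eps) * (vnorm v + eps)) with delta in H by (field; lra).
    pose proof (vnorm_pos _ (vs k)). pose proof (Hpos k). nra. }
  destruct (keyK (hs k) (vs k) (ws k) (Hpos k) Hhk2 (HF k)) as [d [Hd1 Hd2]].
  exists (hs k), (ws k), d. split; [split; [apply Hpos|]|].
  { eapply Rlt_le_trans; [exact H1|apply Rmin_l]. }
  split; [exact H3|]. split; [|exact Hd2].
  intro i. eapply Rle_trans; [apply Hd1|]. apply Rmult_le_compat_l; lra.
Qed.
End Main.

Lemma Tcrit p (S : Vec p -> Prop) (y z : Vec p) :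
  (forall eps, 0 < eps -> exists t (u : Vec p), 0 < t < eps /\
     (forall i, Rabs (u i - z i) < eps) /\ S (vecadd y (vecscal t u))) ->
  Tcone S y z.
Proof.
  intro H.
  destruct (choice2 (fun n t (u : Vec p) => 0 < t < / (INR n + 1) /\
     (forall i, Rabs (u i - z i) < / (INR n + 1)) /\ S (vecadd y (vecscal t u))))
    as [ts [us Htu]].
  { intro n. apply H, inv_pos. }
  exists ts. split; [intro n; apply Htu|]. split.
  - intros eps He. destruct (inv_small eps He) as [N HN]. exists N. intros n Hn.
    unfold R_dist. rewrite Rminus_0_r, Rabs_right by (left; apply Htu).
    eapply Rlt_trans; [apply Htu|auto].
  - exists us. split; [|intro k; apply Htu].
    intros eps He. destruct (inv_small eps He) as [N HN]. exists N. intros n Hn i.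
    eapply Rlt_trans; [apply Htu|auto].
Qed.

Lemma vec_ext p (a b : Vec p) : (forall i, a i = b i) -> a = b.
Proof. intro; apply functional_extensionality; auto. Qed.

Section Main2.
Variable X : NormedSpace.
Variable p : nat.
Variable P : Vec p -> Prop.
Hypothesis hP : ordering_cone P.
Variable F : X -> Vec p -> Prop.
Variable x : X.
Variable y : Vec p.
Hypothesis hgph : F x y.
Variables l delta : R.
Hypothesis Hl : 0 < l.
Hypothesis Hd : 0 < delta.
Hypothesis HLip : forall x1 x2, vnorm (vsub x1 x) < delta -> vnorm (vsub x2 x) < delta ->
    forall w, F x1 w -> exists w', F x2 w' /\
      forall i, Rabs (w i - w' i) <= l * vnorm (vsub x1 x2).
Hypothesis hPE : PEff (F x) P y.

Lemma P0 : P vec0.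
Proof. apply hP. Qed.

Lemma part1a w : DF (Fup F P) x y vzero w -> negP P w -> w = vec0.
Proof.
  intros HD HN. apply (proj2 hPE). split; [|exact HN].
  apply Tcrit. intros eps He.
  set (e' := Rmin (eps / 2) (eps / (2 * (l + 1)))).
  assert (He' : 0 < e'). { apply Rmin_pos; apply Rdiv_lt_0_compat; lra. }
  destruct (lemB X p P F x y l delta Hl Hd HLip vzero w HD e' He') as [h [w' [d [Hh [H1 [H2 H3]]]]]].
  exists h, (vecadd w' d). split. { split; [lra|]. assert (e' <= eps/2) by apply Rmin_l. lra. }
  split; [|exact H3].
  intro i. specialize (H1 i). specialize (H2 i). rewrite vnorm0, Rplus_0_l in H2.
  assert (e' <= eps / (2 * (l + 1))) by apply Rmin_r.
  assert (e' <= eps / 2) by apply Rmin_l.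
  assert (l * e' <= l * (eps / (2 * (l + 1)))) by (apply Rmult_le_compat_l; lra).
  assert (l * (eps / (2 * (l + 1))) <= eps / 2).
  { replace (l * (eps / (2 * (l + 1)))) with ((eps / 2) * (l / (l + 1))) by (field; lra).
    assert (l / (l + 1) <= 1). { apply Rmult_le_reg_r with (l + 1); [lra|].
      replace (l / (l + 1) * (l + 1)) with l by (field; lra). lra. }
    nra. }
  unfold vecadd. replace (w' i + d i - w i) with ((w' i - w i) + d i) by ring.
  eapply Rle_lt_trans; [apply Rabs_triang|]. lra.
Qed.

Lemma Fup_of a b : F a b -> Fup F P a b.
Proof.
  intro H. exists b, vec0. split; [exact H|]. split; [apply P0|].
  apply vec_ext; intro i; unfold vecadd, vec0; ring.
Qed.

Lemma negP0 : negP P vec0.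
Proof.
  unfold negP. replace (vecopp vec0) with (@vec0 p). apply P0.
  apply vec_ext; intro i; unfold vecopp, vec0; ring.
Qed.

Lemma part1b : DF (Fup F P) x y vzero vec0.
Proof.
  exists (fun k => / (INR k + 1)). split; [intro; apply inv_pos|]. split; [apply inv_cv|].
  exists (fun _ => vzero), (fun _ => vec0). split; [|split].
  - intros eps He. exists O. intros. rewrite vsub_xx, vnorm0. lra.
  - intros eps He. exists O. intros. unfold vec0. rewrite Rminus_0_r, Rabs_R0. lra.
  - intro k. rewrite vscal_z, vadd_0.
    replace (vecadd y (vecscal (/ (INR k + 1)) vec0)) with y.
    + apply Fup_of, hgph.
    + apply vec_ext; intro i; unfold vecadd, vecscal, vec0; ring.
Qed.

Lemma rec_up v z : rec_cone (DF (Fup F P) x y v) z -> negP P z -> z = vec0.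
Proof.
  intros [ts [Hts [Hcv [ys [Hys Hconv]]]]] HN.
  apply (proj2 hPE). split; [|exact HN].
  apply Tcrit. intros eps He.
  pose proof (vnorm_pos _ v) as Hnv.
  set (nv := vnorm v) in *.
  assert (Hc : 0 < eps / (3 * l * (nv + 1))).
  { apply Rdiv_lt_0_compat; [lra|]. apply Rmult_lt_0_compat; lra. }
  destruct (Hcv _ Hc) as [N1 H1].
  destruct (Hconv (eps / 3) ltac:(lra)) as [N2 H2].
  set (j := (N1 + N2)%nat).
  specialize (H1 j ltac:(lia)). specialize (H2 j ltac:(lia)).
  unfold R_dist in H1. rewrite Rminus_0_r, Rabs_right in H1 by (left; apply Hts).
  set (tj := ts j) in *. assert (Htj : 0 < tj) by apply Hts.
  set (e' := Rmin 1 (Rmin (eps * tj) (eps / (3 * tj)))).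
  assert (He' : 0 < e').
  { apply Rmin_pos; [lra|]. apply Rmin_pos. nra. apply Rdiv_lt_0_compat; lra. }
  assert (E1 : e' <= 1) by apply Rmin_l.
  assert (E2 : e' <= eps * tj) by (eapply Rle_trans; [apply Rmin_r|apply Rmin_l]).
  assert (E3 : e' <= eps / (3 * tj)) by (eapply Rle_trans; [apply Rmin_r|apply Rmin_r]).
  destruct (lemB X p P F x y l delta Hl Hd HLip v (ys j) (Hys j) e' He')
    as [h [w' [d [Hh [Hw [Hdd HS]]]]]]. fold nv in Hdd.
  exists (h / tj), (vecscal tj (vecadd w' d)). split; [split|split].
  - apply Rdiv_lt_0_compat; lra.
  - apply Rmult_lt_reg_r with tj; [lra|].
    replace (h / tj * tj) with h by (field; lra). lra.
  - intro i. specialize (Hw i). specialize (Hdd i). specialize (H2 i).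
    unfold vecscal, vecadd in *.
    replace (tj * (w' i + d i) - z i) with
      (tj * (w' i - ys j i) + (tj * ys j i - z i) + tj * d i) by ring.
    assert (A1 : Rabs (tj * (w' i - ys j i)) < eps / 3).
    { rewrite Rabs_mult, Rabs_right by lra.
      assert (tj * Rabs (w' i - ys j i) < tj * (eps / (3 * tj))) by (apply Rmult_lt_compat_l; lra).
      replace (tj * (eps / (3 * tj))) with (eps / 3) in H by (field; lra). lra. }
    assert (A3 : Rabs (tj * d i) < eps / 3).
    { rewrite Rabs_mult, Rabs_right by lra.
      assert (Rabs (d i) <= l * (nv + 1)).
      { eapply Rle_trans; [exact Hdd|]. apply Rmult_le_compat_l; lra. }
      assert (tj * (l * (nv + 1)) < eps / (3 * l * (nv + 1)) * (l * (nv + 1))).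
      { apply Rmult_lt_compat_r; [|exact H1]. apply Rmult_lt_0_compat; lra. }
      replace (eps / (3 * l * (nv + 1)) * (l * (nv + 1))) with (eps / 3) in H0
        by (field; lra).
      pose proof (Rabs_pos (d i)). nra. }
    eapply Rle_lt_trans; [apply Rabs_triang|].
    eapply Rle_lt_trans; [apply Rplus_le_compat_r, Rabs_triang|]. lra.
  - replace (vecadd y (vecscal (h / tj) (vecscal tj (vecadd w' d))))
      with (vecadd y (vecscal h (vecadd w' d))); [exact HS|].
    apply vec_ext; intro i; unfold vecadd, vecscal; field; lra.
Qed.

Lemma DF_ne v : exists w, DF F x y v w.
Proof.
  pose proof (vnorm_pos _ v) as Hnv. set (nv := vnorm v) in *.
  set (c := delta / (nv + 1)).
  assert (Hc : 0 < c) by (apply Rdiv_lt_0_compat; lra).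
  set (hs := fun k => c * / (INR k + 1)).
  assert (Hhs : forall k, 0 < hs k) by (intro; apply Rmult_lt_0_compat; [lra|apply inv_pos]).
  assert (Hhs1 : forall k, hs k * nv < delta).
  { intro k. assert (/ (INR k + 1) <= 1).
    { rewrite <- Rinv_1. apply Rinv_le_contravar; [lra|]. pose proof (pos_INR k); lra. }
    assert (c * nv < delta).
    { unfold c. apply Rmult_lt_reg_r with (nv + 1); [lra|].
      replace (delta / (nv + 1) * nv * (nv + 1)) with (delta * nv) by (field; lra). nra. }
    pose proof (inv_pos k). unfold hs. nra. }
  destruct (choice1 (fun k a => F (vadd x (vscal (hs k) v)) a /\
     forall i, Rabs (y i - a i) <= l * vnorm (vsub x (vadd x (vscal (hs k) v)))))
    as [a Ha].
  { intro k. apply (HLip x (vadd x (vscal (hs k) v))).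
    - rewrite vsub_xx, vnorm0; lra.
    - rewrite vsub_add, vnorm_scal, Rabs_right by (left; apply Hhs). apply Hhs1.
    - exact hgph. }
  set (ws := fun k i => (a k i - y i) / hs k).
  destruct (BWp p ws (l * nv)) as [phi [w [Hphi Hw]]].
  { intros k i. destruct (Ha k) as [_ Hb]. specialize (Hb i).
    rewrite vsub_add2, vnorm_opp, vnorm_scal, (Rabs_right (hs k)) in Hb by (left; apply Hhs). fold nv in Hb.
    unfold ws. apply Rmult_le_reg_r with (hs k); [apply Hhs|].
    replace (Rabs ((a k i - y i) / hs k) * hs k) with (Rabs (y i - a k i)).
    - specialize (Hhs k). nra.
    - unfold Rdiv. rewrite Rabs_mult, Rabs_inv, (Rabs_right (hs k)) by (left; apply Hhs).
      rewrite Rabs_minus_sym. field. specialize (Hhs k). lra. }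
  exists w, (fun k => hs (phi k)). split; [intro; apply Hhs|]. split.
  - intros eps He. destruct (inv_small (eps / c)) as [N HN].
    { apply Rdiv_lt_0_compat; lra. }
    exists N. intros n Hn. unfold R_dist. rewrite Rminus_0_r, Rabs_right by (left; apply Hhs).
    specialize (HN (phi n) ltac:(specialize (Hphi n); lia)).
    unfold hs. apply Rmult_lt_reg_l with (/ c). apply Rinv_0_lt_compat; lra.
    replace (/ c * (c * / (INR (phi n) + 1))) with (/ (INR (phi n) + 1)) by (field; split; [pose proof (pos_INR (phi n)); lra|lra]).
    replace (/ c * eps) with (eps / c) by (field; lra). exact HN.
  - exists (fun _ => v), (fun k => ws (phi k)). split; [|split; [exact Hw|]].
    + intros eps He. exists O. intros. rewrite vsub_xx, vnorm0. lra.
    + intro k. replace (vecadd y (vecscal (hs (phi k)) (ws (phi k)))) with (a (phi k)).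
      * apply Ha.
      * apply vec_ext; intro i; unfold vecadd, vecscal, ws. field.
        specialize (Hhs (phi k)). lra.
Qed.

Lemma rec_mono (S S' : Vec p -> Prop) z : (forall w, S w -> S' w) -> rec_cone S z -> rec_cone S' z.
Proof.
  intros Hs [ts [H1 [H2 [ys [H3 H4]]]]]. exists ts. split; auto. split; auto.
  exists ys. split; auto.
Qed.

Lemma rec0 (S : Vec p -> Prop) : (exists w, S w) -> rec_cone S vec0.
Proof.
  intros [w Hw]. destruct (vec_bound p w) as [M [HM0 HM]].
  exists (fun k => / (INR k + 1)). split; [intro; apply inv_pos|]. split; [apply inv_cv|].
  exists (fun _ => w). split; auto.
  intros eps He. destruct (inv_small (eps / (M + 1))) as [N HN].
  { apply Rdiv_lt_0_compat; lra. }
  exists N. intros k Hk i. specialize (HN k Hk). specialize (HM i).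
  unfold vecscal, vec0. rewrite Rminus_0_r, Rabs_mult, Rabs_right by (left; apply inv_pos).
  pose proof (inv_pos k).
  assert (/ (INR k + 1) * Rabs (w i) <= / (INR k + 1) * (M + 1)).
  { apply Rmult_le_compat_l; lra. }
  assert (/ (INR k + 1) * (M + 1) < eps / (M + 1) * (M + 1)).
  { apply Rmult_lt_compat_r; lra. }
  replace (eps / (M + 1) * (M + 1)) with eps in H1 by (field; lra). lra.
Qed.

Lemma DF_sub v w : DF F x y v w -> DF (Fup F P) x y v w.
Proof.
  intros [hs [H1 [H2 [vs [ws [H3 [H4 H5]]]]]]].
  exists hs. split; auto. split; auto. exists vs, ws. split; auto. split; auto.
  intro k. apply Fup_of, H5.
Qed.

Lemma final :
  set_eq (fun w => DF (Fup F P) x y vzero w /\ negP P w) (fun w => w = vec0) /\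
  (forall v : X, P_bounded P (DF (Fup F P) x y v) /\ P_bounded P (DF F x y v)).
Proof.
  split.
  - intro w. split.
    + intros [H1 H2]. apply part1a; auto.
    + intro E. subst w. split; [apply part1b|apply negP0].
  - intro v. destruct (DF_ne v) as [w0 Hw0]. split; intro z; split.
    + intros [H1 H2]. eapply rec_up; eauto.
    + intro E; subst z. split; [|apply negP0]. apply rec0. exists w0. apply DF_sub, Hw0.
    + intros [H1 H2]. eapply rec_up; eauto. eapply rec_mono; [|exact H1]. apply DF_sub.
    + intro E; subst z. split; [|apply negP0]. apply rec0. eauto.
Qed.
End Main2.

Theorem proposition6p6 (X : NormedSpace) (p : nat) (P : Vec p -> Prop)
  (hP : ordering_cone P) (F : X -> Vec p -> Prop) (x : X) (y : Vec p)
  (hgph : F x y) (hLip : Lipschitz_around F x) (hPE : PEff (F x) P y) :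
  set_eq (fun w => DF (Fup F P) x y vzero w /\ negP P w) (fun w => w = vec0) /\
  (forall v : X, P_bounded P (DF (Fup F P) x y v) /\ P_bounded P (DF F x y v)).
Proof.
  destruct hLip as [l [delta [Hl [Hd HL]]]].
  exact (final X p P hP F x y hgph l delta Hl Hd HL hPE).
Qed.
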